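(* In the isotropic setting below, fix $r>0$, $F\in\mathrm{GL}^+(3)$, $C_p\in\mathrm{PSym}(3)$, and let $U_p=\sqrt{C_p}$, $\varphi:=\sqrt{\mathrm{tr}[(\mathrm{dev}_3\widetilde\Sigma)^2]}$ (well defined, since $\mathrm{tr}[(\mathrm{dev}_3\widetilde\Sigma)^2]\ge0$). Define the Helm admissible set $\mathcal H_r:=\{0\}$ if $\varphi<r$, $\mathcal H_r:=\{-\lambda\,C_p^{-1}\mathrm{dev}_3\widetilde\Sigma/\varphi:\lambda\ge0\}$ if $\varphi=r$, $\mathcal H_r:=\emptyset$ if $\varphi>r$. Then $$\mathcal H_r=-U_p^{-1}\,\mathcal N_r(\mathring\Sigma)\,U_p^{-1}.$$ Equivalently, with $Z=\frac{d}{dt}[C_p^{-1}]$ and $\frac{d}{dt}[C_p]=-C_pZC_p$, the Helm flow rule $\frac{d}{dt}[C_p]=\lambda\,\frac{\mathrm{dev}_3\widetilde\Sigma}{\varphi}\,C_p$ (with $\lambda\ge0$, $\varphi\le r$, $\lambda(\varphi-r)=0$) holds if and only if the Grandi–Stefanelli flow rule $\sqrt{C_p}\,\frac{d}{dt}[C_p^{-1}]\sqrt{C_p}\in-\mathcal N_r(\mathring\Sigma)$ holds; hence in the isotropic case it is also equivalent to the Lion flow rule.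
   Context: $W$ objective and isotropic, written $W(F_e)=\Psi(I_1(C_e),I_2(C_e),I_3(C_e))$ with $\Psi\in C^1$; $\widetilde W(X)=\Psi(\mathrm{tr}X,\mathrm{tr}(\mathrm{Cof}X),\det X)$. $C=F^TF$. $\langle X,Y\rangle=\mathrm{tr}(XY^T)$, $\|\cdot\|$ Frobenius norm, $D$ gradient, $\mathrm{dev}_3X=X-\frac13\mathrm{tr}(X)\mathbb{1}$, $\mathrm{sym}X=\frac12(X+X^T)$. $\widetilde\Sigma:=2\,C\,D\widetilde W(CC_p^{-1})\,C_p^{-1}$ (not symmetric in general). $\mathring\Sigma:=2\,U_p^{-1}\mathrm{sym}[C\,D\widetilde W(CC_p^{-1})]U_p^{-1}$. For symmetric $S$: $\mathcal N_r(S)=\{0\}$ if $\|\mathrm{dev}_3S\|<r$, $\{\lambda\,\mathrm{dev}_3S/\|\mathrm{dev}_3S\|:\lambda\ge0\}$ if $\|\mathrm{dev}_3S\|=r$, $\emptyset$ if $\|\mathrm{dev}_3S\|>r$. $M\mathcal AN=\{MXN:X\in\mathcal A\}$. The Lion flow rule is $\frac{d}{dt}[C_p^{-1}]\in-F_p^{-1}\mathcal N_r(\Sigma_e)F_p^{-T}$ with $\Sigma_e=F_e^TDW(F_e)$, $F_e=FF_p^{-1}$, $C_p=F_p^TF_p$. *)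

(* Defs.v *)
From Stdlib Require Import Reals.
Open Scope R_scope.

Inductive idx : Type := I0 | I1 | I2.

Definition Mat := idx -> idx -> R.
Definition Vec := idx -> R.

Definition sum3 (f : idx -> R) : R := f I0 + f I1 + f I2.

Definition mzero : Mat := fun _ _ => 0.
Definition mid : Mat := fun i j => match i, j with
  | I0, I0 | I1, I1 | I2, I2 => 1 | _, _ => 0 end.
Definition madd (A B : Mat) : Mat := fun i j => A i j + B i j.
Definition mscal (a : R) (A : Mat) : Mat := fun i j => a * A i j.
Definition mopp (A : Mat) : Mat := fun i j => - A i j.
Definition msub (A B : Mat) : Mat := fun i j => A i j - B i j.
Definition mmul (A B : Mat) : Mat := fun i j => sum3 (fun k => A i k * B k j).
Definition mtr (A : Mat) : Mat := fun i j => A j i.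
Definition tr (A : Mat) : R := sum3 (fun i => A i i).

(* cyclic successor on indices; gives the 3x3 cofactor with correct sign *)
Definition nx (i : idx) : idx := match i with I0 => I1 | I1 => I2 | I2 => I0 end.

(* cofactor matrix: Cof A i j = (-1)^(i+j) * minor_{ij} A *)
Definition cof (A : Mat) : Mat := fun i j =>
  A (nx i) (nx j) * A (nx (nx i)) (nx (nx j))
  - A (nx i) (nx (nx j)) * A (nx (nx i)) (nx j).

Definition det (A : Mat) : R := sum3 (fun j => A I0 j * cof A I0 j).

Definition minv (A : Mat) : Mat := mscal (/ det A) (mtr (cof A)).

Definition dev3 (X : Mat) : Mat := msub X (mscal (tr X / 3) mid).
Definition msym (X : Mat) : Mat := mscal (1/2) (madd X (mtr X)).
Definition fnorm (X : Mat) : R := sqrt (sum3 (fun i => sum3 (fun j => X i j ^ 2))).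

Definition symmetric (A : Mat) : Prop := mtr A = A.
Definition posdef (A : Mat) : Prop :=
  forall v : Vec, v <> (fun _ => 0) ->
    0 < sum3 (fun i => sum3 (fun j => v i * A i j * v j)).
Definition PSym (A : Mat) : Prop := symmetric A /\ posdef A.

Definition Emat (i j : idx) : Mat := fun k l =>
  if andb (match k, i with I0,I0|I1,I1|I2,I2 => true | _,_ => false end)
          (match l, j with I0,I0|I1,I1|I2,I2 => true | _,_ => false end)
  then 1 else 0.

(* G is the gradient (w.r.t. the Frobenius product <X,Y> = tr(X Y^T)) of f at X:
   its entries are the partial derivatives of f in the directions E_ij. *)
Definition is_gradient (f : Mat -> R) (X G : Mat) : Prop :=
  forall i j, derivable_pt_lim (fun t => f (madd X (mscal t (Emat i j)))) 0 (G i j).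

Definition cont3 (g : R -> R -> R -> R) (a b c : R) : Prop :=
  forall eps, 0 < eps -> exists delta, 0 < delta /\
    forall x y z, Rabs (x - a) < delta -> Rabs (y - b) < delta -> Rabs (z - c) < delta ->
      Rabs (g x y z - g a b c) < eps.

(* Psi is C^1 on the open octant (0,oo)^3 (the range of the invariants
   (I1,I2,I3) of positive definite matrices) *)
Definition C1_pos (Psi : R -> R -> R -> R) : Prop :=
  exists d1 d2 d3 : R -> R -> R -> R,
    forall a b c, 0 < a -> 0 < b -> 0 < c ->
      derivable_pt_lim (fun x => Psi x b c) a (d1 a b c) /\
      derivable_pt_lim (fun y => Psi a y c) b (d2 a b c) /\
      derivable_pt_lim (fun z => Psi a b z) c (d3 a b c) /\
      cont3 d1 a b c /\ cont3 d2 a b c /\ cont3 d3 a b c.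

Definition Wt (Psi : R -> R -> R -> R) (X : Mat) : R := Psi (tr X) (tr (cof X)) (det X).

Definition Cmat (F : Mat) : Mat := mmul (mtr F) F.

(* Sigma~ = 2 C DW~(C Cp^{-1}) Cp^{-1}, with G = DW~(C Cp^{-1}) *)
Definition Sig_tilde (F Cp G : Mat) : Mat :=
  mscal 2 (mmul (mmul (Cmat F) G) (minv Cp)).

Definition Sig_ring (F Up G : Mat) : Mat :=
  mscal 2 (mmul (mmul (minv Up) (msym (mmul (Cmat F) G))) (minv Up)).

Definition Ncone (r : R) (S Y : Mat) : Prop :=
  (fnorm (dev3 S) < r /\ Y = mzero) \/
  (fnorm (dev3 S) = r /\ exists lam, 0 <= lam /\ Y = mscal (lam / fnorm (dev3 S)) (dev3 S)).

Definition phi_of (Sigt : Mat) : R := sqrt (tr (mmul (dev3 Sigt) (dev3 Sigt))).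

Definition Helm (r : R) (Cp Sigt Y : Mat) : Prop :=
  (phi_of Sigt < r /\ Y = mzero) \/
  (phi_of Sigt = r /\ exists lam, 0 <= lam /\
     Y = mopp (mscal (lam / phi_of Sigt) (mmul (minv Cp) (dev3 Sigt)))).

(* Main.v *)
Require Import Defs.
From Stdlib Require Import Reals Lra Psatz FunctionalExtensionality Classical.
From Stdlib Require Setoid.
Open Scope R_scope.

Ltac mext := apply functional_extensionality; let i := fresh "i" in intro i; apply functional_extensionality; let j := fresh "j" in intro j; destruct i, j.
Ltac mu := unfold msym, dev3, minv in *; unfold mmul, madd, msub, mscal, mopp, mtr, mid, mzero, tr, det, cof, nx in *; unfold sum3 in *; simpl.

Lemma mmul_assoc A B C : mmul (mmul A B) C = mmul A (mmul B C).
Proof. mext; mu; ring. Qed.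
Lemma mmul_mid_l A : mmul mid A = A.
Proof. mext; mu; ring. Qed.
Lemma mmul_mid_r A : mmul A mid = A.
Proof. mext; mu; ring. Qed.
Lemma mmul_scal_l a A B : mmul (mscal a A) B = mscal a (mmul A B).
Proof. mext; mu; ring. Qed.
Lemma mmul_scal_r a A B : mmul A (mscal a B) = mscal a (mmul A B).
Proof. mext; mu; ring. Qed.
Lemma mmul_opp_l A B : mmul (mopp A) B = mopp (mmul A B).
Proof. mext; mu; ring. Qed.
Lemma mmul_opp_r A B : mmul A (mopp B) = mopp (mmul A B).
Proof. mext; mu; ring. Qed.
Lemma mmul_sub_l A B C : mmul (msub A B) C = msub (mmul A C) (mmul B C).
Proof. mext; mu; ring. Qed.
Lemma mmul_sub_r A B C : mmul C (msub A B) = msub (mmul C A) (mmul C B).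
Proof. mext; mu; ring. Qed.
Lemma mmul_zero_l A : mmul mzero A = mzero.
Proof. mext; mu; ring. Qed.
Lemma mmul_zero_r A : mmul A mzero = mzero.
Proof. mext; mu; ring. Qed.
Lemma mscal_zero a : mscal a mzero = mzero.
Proof. mext; mu; ring. Qed.
Lemma mscal0 A : mscal 0 A = mzero.
Proof. mext; mu; ring. Qed.
Lemma mopp_zero : mopp mzero = mzero.
Proof. mext; mu; ring. Qed.
Lemma mopp_opp A : mopp (mopp A) = A.
Proof. mext; mu; ring. Qed.
Lemma tr_comm A B : tr (mmul A B) = tr (mmul B A).
Proof. mu; ring. Qed.
Lemma mtr_mmul A B : mtr (mmul A B) = mmul (mtr B) (mtr A).
Proof. mext; mu; ring. Qed.
Lemma cof_mul A B : cof (mmul A B) = mmul (cof A) (cof B).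
Proof. mext; mu; ring. Qed.
Lemma det_mul A B : det (mmul A B) = det A * det B.
Proof. mu; ring. Qed.
Lemma cof_mtr A : cof (mtr A) = mtr (cof A).
Proof. mext; mu; ring. Qed.
Lemma det_cof A : det (cof A) = det A ^ 2.
Proof. mu; ring. Qed.
Lemma adj_r A : mmul A (mtr (cof A)) = mscal (det A) mid.
Proof. mext; mu; ring. Qed.
Lemma adj_l A : mmul (mtr (cof A)) A = mscal (det A) mid.
Proof. mext; mu; ring. Qed.
Lemma minv_r A : det A <> 0 -> mmul A (minv A) = mid.
Proof. intro H. unfold minv. rewrite mmul_scal_r, adj_r. mext; mu; field; auto. Qed.
Lemma minv_l A : det A <> 0 -> mmul (minv A) A = mid.
Proof. intro H. unfold minv. rewrite mmul_scal_l, adj_l. mext; mu; field; auto. Qed.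
Lemma minv_mul A B : minv (mmul A B) = mmul (minv B) (minv A).
Proof. unfold minv. rewrite cof_mul, det_mul, mtr_mmul, mmul_scal_l, mmul_scal_r.
  mext; unfold mscal; rewrite Rinv_mult; ring. Qed.
Lemma det_minv A : det A <> 0 -> det (minv A) * det A = 1.
Proof. intro H. rewrite <- det_mul, minv_l by auto. mu; ring. Qed.
Lemma sym_cof A : symmetric A -> symmetric (cof A).
Proof. unfold symmetric. intro H. rewrite <- cof_mtr, H. auto. Qed.
Lemma sym_entry A : symmetric A -> forall i j, A i j = A j i.
Proof. unfold symmetric; intros H i j. change (A i j = mtr A i j). rewrite H. auto. Qed.
Lemma sym_minv A : symmetric A -> symmetric (minv A).
Proof. intro H. pose proof (sym_entry _ (sym_cof A H)) as E. unfold symmetric, minv.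
  mext; unfold mtr, mscal; f_equal; apply E. Qed.

Lemma mvt_between f f' u v :
  (forall x, Rmin u v <= x <= Rmax u v -> derivable_pt_lim f x (f' x)) ->
  exists x, Rabs (x - u) <= Rabs (v - u) /\ f v - f u = f' x * (v - u).
Proof.
  intro H. destruct (Rtotal_order u v) as [Hlt|[Heq|Hgt]].
  - destruct (MVT_cor2 f f' u v Hlt) as [x [E Hx]].
    { intros x Hx; apply H. rewrite Rmin_left, Rmax_right by lra. lra. }
    exists x; split; auto. rewrite !Rabs_right by lra. lra.
  - subst. exists v. split. right; auto. ring.
  - destruct (MVT_cor2 f f' v u Hgt) as [x [E Hx]].
    { intros x Hx; apply H. rewrite Rmin_right, Rmax_left by lra. lra. }
    exists x; split. rewrite !Rabs_left1 by lra. lra. lra.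
Qed.

Lemma deriv_affine c g : derivable_pt_lim (fun t => c + t * g) 0 g.
Proof.
  intros eps he. exists (mkposreal eps he). intros h hn hh. simpl.
  replace ((c + (0 + h) * g - (c + 0 * g)) / h - g) with 0 by (field; auto).
  rewrite Rabs_R0; auto.
Qed.

Lemma absb x : - Rabs x <= x <= Rabs x.
Proof. split_Rabs; lra. Qed.

Lemma chain3 (Psi d1 d2 d3 : R -> R -> R -> R) a b c al be ga :
  (forall x y z, 0 < x -> 0 < y -> 0 < z ->
     derivable_pt_lim (fun x => Psi x y z) x (d1 x y z) /\
     derivable_pt_lim (fun y => Psi x y z) y (d2 x y z) /\
     derivable_pt_lim (fun z => Psi x y z) z (d3 x y z)) ->
  cont3 d1 a b c -> cont3 d2 a b c -> 0 < a -> 0 < b -> 0 < c ->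
  derivable_pt_lim (fun t => Psi (a + t * al) (b + t * be) (c + t * ga)) 0
    (d1 a b c * al + d2 a b c * be + d3 a b c * ga).
Proof.
  intros HD H1 H2 ha hb hc eps heps.
  set (K := Rabs al + Rabs be + Rabs ga + 1).
  assert (HK : 0 < K) by (unfold K; pose proof (Rabs_pos al); pose proof (Rabs_pos be);
    pose proof (Rabs_pos ga); lra).
  assert (D3 : derivable_pt_lim (fun t => Psi a b (c + t * ga)) 0 (d3 a b c * ga)).
  { change (fun t => Psi a b (c + t * ga)) with (comp (fun z => Psi a b z) (fun t => c + t * ga)).
    apply derivable_pt_lim_comp. apply deriv_affine.
    replace (c + 0 * ga) with c by ring. apply HD; auto. }
  destruct (D3 (eps/3)) as [del3 Hd3]. lra.
  destruct (H1 (eps/3/K)) as [e1 [he1 He1]]. apply Rdiv_lt_0_compat; lra.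
  destruct (H2 (eps/3/K)) as [e2 [he2 He2]]. apply Rdiv_lt_0_compat; lra.
  set (m := Rmin (Rmin (Rmin e1 e2) (Rmin a b)) c).
  assert (hm : 0 < m) by (unfold m; repeat apply Rmin_glb_lt; auto).
  assert (hmK : 0 < Rmin del3 (m / K)) by (apply Rmin_glb_lt; [apply cond_pos| apply Rdiv_lt_0_compat; lra]).
  exists (mkposreal _ hmK). intros h hn hh. simpl in hh.
  assert (hh3 : Rabs h < del3) by (eapply Rlt_le_trans; [exact hh| apply Rmin_l]).
  assert (hhm : Rabs h * K < m).
  { assert (Rabs h < m / K) by (eapply Rlt_le_trans; [exact hh| apply Rmin_r]).
    apply (Rmult_lt_compat_r K) in H; auto. unfold Rdiv in H. rewrite Rmult_assoc, Rinv_l in H; lra. }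
  assert (Hsm : forall w, Rabs w <= K -> Rabs (h * w) < m).
  { intros w hw. rewrite Rabs_mult. eapply Rle_lt_trans; [|exact hhm].
    apply Rmult_le_compat_l; auto. apply Rabs_pos. }
  assert (mle1 : m <= e1) by (unfold m; repeat (eapply Rle_trans; [apply Rmin_l|]); lra).
  assert (mle2 : m <= e2) by (unfold m; eapply Rle_trans; [apply Rmin_l|]; eapply Rle_trans; [apply Rmin_l|]; apply Rmin_r).
  assert (mlea : m <= a) by (unfold m; eapply Rle_trans; [apply Rmin_l|]; eapply Rle_trans; [apply Rmin_r|]; apply Rmin_l).
  assert (mleb : m <= b) by (unfold m; eapply Rle_trans; [apply Rmin_l|]; eapply Rle_trans; [apply Rmin_r|]; apply Rmin_r).
  assert (mlec : m <= c) by (unfold m; apply Rmin_r).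
  assert (Ka : Rabs al <= K) by (unfold K; pose proof (Rabs_pos be); pose proof (Rabs_pos ga); lra).
  assert (Kb : Rabs be <= K) by (unfold K; pose proof (Rabs_pos al); pose proof (Rabs_pos ga); lra).
  assert (Kc : Rabs ga <= K) by (unfold K; pose proof (Rabs_pos be); pose proof (Rabs_pos al); lra).
  pose proof (Hsm _ Ka) as Sa. pose proof (Hsm _ Kb) as Sb. pose proof (Hsm _ Kc) as Sc.
  pose proof (absb (h*al)) as Ba.
  pose proof (absb (h*be)) as Bb.
  pose proof (absb (h*ga)) as Bc.
  set (y := b + h * be). set (z := c + h * ga).
  assert (hy : 0 < y) by (unfold y; lra). assert (hz : 0 < z) by (unfold z; lra).
  destruct (mvt_between (fun x => Psi x y z) (fun x => d1 x y z) a (a + h * al)) as [xi [Hxi E1]].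
  { intros x Hx. assert (0 < x).
    { destruct Hx as [Hx _]. eapply Rlt_le_trans; [|exact Hx]. apply Rmin_glb_lt; lra. }
    apply HD; auto. }
  destruct (mvt_between (fun y => Psi a y z) (fun y => d2 a y z) b y) as [eta [Heta E2]].
  { intros x Hx. assert (0 < x).
    { destruct Hx as [Hx _]. eapply Rlt_le_trans; [|exact Hx]. apply Rmin_glb_lt; unfold y; lra. }
    apply HD; auto. }
  pose proof (Hd3 h hn hh3) as T3.
  replace (a + (0 + h) * al) with (a + h * al) in * by ring.
  replace (a + 0 * al) with a by ring. replace (b + 0 * be) with b by ring.
  replace (c + 0 * ga) with c in * by ring. replace (0 + h) with h in * by ring.
  fold y z. fold z in T3.
  assert (C1 : Rabs (d1 xi y z - d1 a b c) < eps / 3 / K).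
  { apply He1; unfold y, z; ring_simplify (a + h*al - a) in Hxi;
    replace (b + h * be - b) with (h*be) by ring; replace (c + h * ga - c) with (h*ga) by ring; lra. }
  assert (C2 : Rabs (d2 a eta z - d2 a b c) < eps / 3 / K).
  { apply He2. replace (a - a) with 0 by ring; rewrite Rabs_R0; lra.
    unfold y in Heta; ring_simplify (b + h*be - b) in Heta; lra.
    unfold z; replace (c + h * ga - c) with (h*ga) by ring; lra. }
  replace ((Psi (a + h * al) y z - Psi a b c) / h - (d1 a b c * al + d2 a b c * be + d3 a b c * ga))
    with ((d1 xi y z - d1 a b c) * al + (d2 a eta z - d2 a b c) * be
          + ((Psi a b z - Psi a b c) / h - d3 a b c * ga)).
  2:{ replace (Psi (a + h * al) y z - Psi a b c) with
        ((Psi (a + h * al) y z - Psi a y z) + (Psi a y z - Psi a b z) + (Psi a b z - Psi a b c)) by ring.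
      rewrite E1, E2. unfold y. field. auto. }
  assert (P : forall D w, Rabs D < eps/3/K -> Rabs w <= K -> Rabs (D * w) < eps/3).
  { intros D w hD hw. rewrite Rabs_mult.
    apply Rle_lt_trans with (Rabs D * K). apply Rmult_le_compat_l; auto; apply Rabs_pos.
    apply (Rmult_lt_compat_r K) in hD; auto.
    replace (eps/3/K*K) with (eps/3) in hD by (field; lra). lra. }
  pose proof (P _ _ C1 Ka). pose proof (P _ _ C2 Kb).
  eapply Rle_lt_trans. apply Rabs_triang.
  eapply Rle_lt_trans. apply Rplus_le_compat_r. apply Rabs_triang. lra.
Qed.

Definition Gform (d1 d2 d3 : R) (X : Mat) : Mat := fun i j =>
  d1 * mid i j + d2 * (tr X * mid i j - X j i) + d3 * cof X i j.

Lemma Wt_line Psi X i j t : Wt Psi (madd X (mscal t (Emat i j))) =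
  Psi (tr X + t * mid i j) (tr (cof X) + t * (tr X * mid i j - X j i)) (det X + t * cof X i j).
Proof. destruct i, j; unfold Wt; f_equal; unfold Emat; mu; ring. Qed.

Lemma grad_form Psi X G : C1_pos Psi -> 0 < tr X -> 0 < tr (cof X) -> 0 < det X ->
  is_gradient (Wt Psi) X G -> exists e1 e2 e3, G = Gform e1 e2 e3 X.
Proof.
  intros [d1 [d2 [d3 H]]] ha hb hc HG.
  exists (d1 (tr X) (tr (cof X)) (det X)), (d2 (tr X) (tr (cof X)) (det X)), (d3 (tr X) (tr (cof X)) (det X)).
  apply functional_extensionality; intro i; apply functional_extensionality; intro j.
  apply (uniqueness_limite _ 0 _ _ (HG i j)).
  assert (E : (fun t => Wt Psi (madd X (mscal t (Emat i j)))) =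
     (fun t => Psi (tr X + t * mid i j) (tr (cof X) + t * (tr X * mid i j - X j i)) (det X + t * cof X i j)))
    by (apply functional_extensionality; intro t; apply Wt_line).
  rewrite E. unfold Gform.
  replace (d1 (tr X) (tr (cof X)) (det X) * mid i j + d2 (tr X) (tr (cof X)) (det X) * (tr X * mid i j - X j i) +
   d3 (tr X) (tr (cof X)) (det X) * cof X i j) with
   (d1 (tr X) (tr (cof X)) (det X) * mid i j + d2 (tr X) (tr (cof X)) (det X) * (tr X * mid i j - X j i) +
   d3 (tr X) (tr (cof X)) (det X) * cof X i j) by ring.
  apply chain3; auto.
  - intros x y z hx hy hz. destruct (H x y z hx hy hz) as [? [? [? _]]]. auto.
  - apply (H _ _ _ ha hb hc).
  - apply (H _ _ _ ha hb hc).
Qed.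

Lemma sym_S C M e1 e2 e3 : symmetric C -> symmetric M ->
  symmetric (mmul C (Gform e1 e2 e3 (mmul C M))).
Proof.
  intros HC HM. pose proof (sym_entry _ HC) as EC. pose proof (sym_entry _ HM) as EM.
  unfold symmetric. mext; unfold Gform; mu;
  rewrite (EC I1 I0), (EC I2 I0), (EC I2 I1), (EM I1 I0), (EM I2 I0), (EM I2 I1); ring.
Qed.

Definition sumsq (Y : Mat) : R := sum3 (fun i => sum3 (fun j => Y i j ^ 2)).

Lemma sumsq_pos Y : det Y <> 0 -> 0 < sumsq Y.
Proof.
  intro H. unfold sumsq, sum3.
  destruct (Rlt_le_dec 0 (Y I0 I0 ^ 2 + Y I0 I1 ^ 2 + Y I0 I2 ^ 2 + (Y I1 I0 ^ 2 + Y I1 I1 ^ 2 + Y I1 I2 ^ 2) +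
  (Y I2 I0 ^ 2 + Y I2 I1 ^ 2 + Y I2 I2 ^ 2))) as [h|h]; auto.
  exfalso. apply H.
  assert (Z : forall i j, Y i j = 0).
  { intros i j. assert (Y i j ^ 2 <= 0).
    { pose proof (pow2_ge_0 (Y I0 I0)). pose proof (pow2_ge_0 (Y I0 I1)). pose proof (pow2_ge_0 (Y I0 I2)).
      pose proof (pow2_ge_0 (Y I1 I0)). pose proof (pow2_ge_0 (Y I1 I1)). pose proof (pow2_ge_0 (Y I1 I2)).
      pose proof (pow2_ge_0 (Y I2 I0)). pose proof (pow2_ge_0 (Y I2 I1)). pose proof (pow2_ge_0 (Y I2 I2)).
      destruct i, j; lra. }
    nra. }
  mu. rewrite !Z. ring.
Qed.

Lemma sumsq_ge0 Y : 0 <= sumsq Y.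
Proof. unfold sumsq, sum3.
  pose proof (pow2_ge_0 (Y I0 I0)). pose proof (pow2_ge_0 (Y I0 I1)). pose proof (pow2_ge_0 (Y I0 I2)).
  pose proof (pow2_ge_0 (Y I1 I0)). pose proof (pow2_ge_0 (Y I1 I1)). pose proof (pow2_ge_0 (Y I1 I2)).
  pose proof (pow2_ge_0 (Y I2 I0)). pose proof (pow2_ge_0 (Y I2 I1)). pose proof (pow2_ge_0 (Y I2 I2)). lra. Qed.

Lemma tr_AtAWW A W : symmetric W -> tr (mmul (mmul (mtr A) A) (mmul W W)) = sumsq (mmul A W).
Proof. intro HW. pose proof (sym_entry _ HW) as EW. unfold sumsq. mu.
  rewrite (EW I1 I0), (EW I2 I0), (EW I2 I1). ring. Qed.

Lemma tr_DD D : symmetric D -> tr (mmul D D) = sumsq D.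
Proof. intro HW. pose proof (sym_entry _ HW) as EW. unfold sumsq. mu.
  rewrite (EW I1 I0), (EW I2 I0), (EW I2 I1). ring. Qed.

Lemma det_mtr A : det (mtr A) = det A.
Proof. mu. ring. Qed.

Definition quad (A : Mat) (v : Vec) := sum3 (fun i => sum3 (fun j => v i * A i j * v j)).

Lemma posdef_zero A v : posdef A -> quad A v <= 0 -> forall i, v i = 0.
Proof.
  intros HP hq i. destruct (classic (v = (fun _ => 0))) as [e|e].
  - rewrite e; auto.
  - pose proof (HP v e). unfold quad in hq. lra.
Qed.

Lemma posdef_det A : PSym A -> det A <> 0.
Proof.
  intros [HS HP] H0. pose proof (sym_entry _ HS) as EA.
  assert (Hc : forall k i, cof A k i = 0).
  { intros k i. apply (posdef_zero A (fun i => cof A k i) HP).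
    replace (quad A (fun i => cof A k i)) with (cof A k k * det A).
    rewrite H0; lra. destruct k; unfold quad; mu; ring. }
  assert (h1 : 0 < A I1 I1).
  { set (e := fun i => match i with I1 => 1 | _ => 0 end).
    assert (e <> (fun _ => 0)). { intro E. apply (f_equal (fun f => f I1)) in E. unfold e in E. lra. }
    pose proof (HP e H). unfold e in H1. unfold sum3 in H1. simpl in H1. lra. }
  set (w := fun i => match i with I0 => A I1 I1 | I1 => - A I1 I0 | I2 => 0 end).
  assert (quad A w <= 0).
  { replace (quad A w) with (A I1 I1 * cof A I2 I2). rewrite Hc; lra.
    unfold quad, w; mu. rewrite (EA I0 I1). ring. }
  pose proof (posdef_zero A w HP H I0). unfold w in H1. lra.
Qed.

Lemma mtr_mtr A : mtr (mtr A) = A.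
Proof. mext; mu; ring. Qed.

Lemma msym_sym S : symmetric S -> msym S = S.
Proof. intro H. pose proof (sym_entry _ H) as E. mext; mu; rewrite ?(E I1 I0), ?(E I2 I0), ?(E I2 I1); field. Qed.

Lemma sym_mul_conj V S : symmetric V -> symmetric S -> symmetric (mmul (mmul V S) V).
Proof. unfold symmetric. intros h1 h2. rewrite !mtr_mmul, h1, h2, mmul_assoc. auto. Qed.

Lemma sym_scal a S : symmetric S -> symmetric (mscal a S).
Proof. unfold symmetric. intro h. rewrite <- h at 2. mext; mu; ring. Qed.

Lemma sym_dev S : symmetric S -> symmetric (dev3 S).
Proof. intro H. pose proof (sym_entry _ H) as E. unfold symmetric. mext; mu; rewrite ?(E I1 I0), ?(E I2 I0), ?(E I2 I1); ring. Qed.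

Lemma dev3_conj A B Y : mmul A B = mid -> mmul B A = mid ->
  dev3 (mmul (mmul A Y) B) = mmul (mmul A (dev3 Y)) B.
Proof.
  intros AB BA. assert (T : tr (mmul (mmul A Y) B) = tr Y).
  { rewrite tr_comm, <- mmul_assoc, BA, mmul_mid_l. auto. }
  unfold dev3. rewrite T, mmul_sub_r, mmul_sub_l, mmul_scal_r, mmul_scal_l, mmul_mid_r, AB. auto.
Qed.

Lemma conj_inj U V A B : mmul U V = mid -> mmul V U = mid ->
  mmul (mmul U A) U = mmul (mmul U B) U -> A = B.
Proof.
  intros UV VU E. apply (f_equal (fun X => mmul (mmul V X) V)) in E.
  rewrite !mmul_assoc, UV, <- !mmul_assoc, VU, !mmul_mid_l, !mmul_mid_r in E. auto.
Qed.

Theorem mainTheorem10 (Psi : R -> R -> R -> R) (r : R) (F Cp Up G : Mat) :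
  C1_pos Psi ->
  0 < r ->
  0 < det F ->
  PSym Cp ->
  PSym Up -> mmul Up Up = Cp ->
  is_gradient (Wt Psi) (mmul (Cmat F) (minv Cp)) G ->
  0 <= tr (mmul (dev3 (Sig_tilde F Cp G)) (dev3 (Sig_tilde F Cp G))) /\
  (forall Y : Mat,
     Helm r Cp (Sig_tilde F Cp G) Y <->
     exists Y', Ncone r (Sig_ring F Up G) Y' /\
                Y = mopp (mmul (mmul (minv Up) Y') (minv Up))) /\
  (forall Z : Mat,
     (exists lam, 0 <= lam /\ phi_of (Sig_tilde F Cp G) <= r /\
        lam * (phi_of (Sig_tilde F Cp G) - r) = 0 /\
        mopp (mmul (mmul Cp Z) Cp) =
          mmul (mscal (lam / phi_of (Sig_tilde F Cp G)) (dev3 (Sig_tilde F Cp G))) Cp)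
     <->
     exists Y', Ncone r (Sig_ring F Up G) Y' /\ mmul (mmul Up Z) Up = mopp Y').
Proof.
  intros HPsi hr hF HCp HUp HUU HG.
  pose proof (posdef_det _ HUp) as dU.
  set (V := minv Up).
  assert (UV : mmul Up V = mid) by (apply minv_r; auto).
  assert (VU : mmul V Up = mid) by (apply minv_l; auto).
  assert (HV : symmetric V) by (apply sym_minv; apply HUp).
  assert (HM : minv Cp = mmul V V) by (rewrite <- HUU, minv_mul; auto).
  assert (dV : det V <> 0).
  { intro h. pose proof (det_minv _ dU) as h2. fold V in h2. rewrite h in h2. lra. }
  assert (HC : symmetric (Cmat F)) by (unfold symmetric, Cmat; rewrite mtr_mmul, mtr_mtr; auto).
  assert (HVV : symmetric (mmul V V)) by (unfold symmetric; rewrite mtr_mmul, HV; auto).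
  rewrite HM in HG.
  assert (Hfv : det (mmul F V) <> 0) by (rewrite det_mul; apply Rmult_integral_contrapositive; split; lra).
  assert (ha : 0 < tr (mmul (Cmat F) (mmul V V))).
  { unfold Cmat. rewrite tr_AtAWW by auto. apply sumsq_pos; auto. }
  assert (hc : 0 < det (mmul (Cmat F) (mmul V V))).
  { unfold Cmat. rewrite !det_mul, det_mtr.
    assert (0 < det F * det F) by nra. assert (0 < det V * det V).
    { destruct (Rlt_le_dec 0 (det V)); [nra|]. assert (det V < 0) by lra. nra. }
    nra. }
  assert (hb : 0 < tr (cof (mmul (Cmat F) (mmul V V)))).
  { unfold Cmat. rewrite !cof_mul, cof_mtr, tr_AtAWW by (apply sym_cof; auto). apply sumsq_pos.
    rewrite det_mul, !det_cof. apply Rmult_integral_contrapositive; split; apply pow_nonzero; lra. }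
  destruct (grad_form _ _ _ HPsi ha hb hc HG) as [e1 [e2 [e3 EG]]].
  assert (HS : symmetric (mmul (Cmat F) G)) by (rewrite EG; apply sym_S; auto).
  set (S := mmul (Cmat F) G) in *.
  assert (ESR : Sig_ring F Up G = mscal 2 (mmul (mmul V S) V)).
  { unfold Sig_ring. fold V S. rewrite msym_sym; auto. }
  assert (HR : symmetric (Sig_ring F Up G)) by (rewrite ESR; apply sym_scal, sym_mul_conj; auto).
  assert (EST : Sig_tilde F Cp G = mmul (mmul Up (Sig_ring F Up G)) V).
  { unfold Sig_tilde. fold S. rewrite ESR, HM, ?mmul_scal_l, ?mmul_scal_r, ?mmul_scal_l, !mmul_assoc.
    rewrite <- (mmul_assoc Up V), UV, mmul_mid_l. auto. }
  set (D := dev3 (Sig_ring F Up G)).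
  assert (HD : symmetric D) by (apply sym_dev; auto).
  assert (EdT : dev3 (Sig_tilde F Cp G) = mmul (mmul Up D) V) by (rewrite EST; apply dev3_conj; auto).
  assert (Etr : tr (mmul (dev3 (Sig_tilde F Cp G)) (dev3 (Sig_tilde F Cp G))) = sumsq D).
  { rewrite EdT, !mmul_assoc, <- (mmul_assoc V Up), VU, mmul_mid_l, tr_comm, !mmul_assoc, VU, mmul_mid_r.
    apply tr_DD; auto. }
  assert (Hphi : phi_of (Sig_tilde F Cp G) = fnorm D) by (unfold phi_of; rewrite Etr; auto).
  assert (K4 : mmul (minv Cp) (dev3 (Sig_tilde F Cp G)) = mmul (mmul V D) V).
  { rewrite HM, EdT, !mmul_assoc, <- (mmul_assoc V Up), VU, mmul_mid_l. auto. }
  assert (K5 : mmul (dev3 (Sig_tilde F Cp G)) Cp = mmul (mmul Up D) Up).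
  { rewrite EdT, <- HUU, !mmul_assoc, <- (mmul_assoc V Up), VU, mmul_mid_l. auto. }
  fold V. unfold Helm, Ncone. rewrite Hphi, K4. fold D.
  set (phi := fnorm D) in *.
  split; [rewrite Etr; apply sumsq_ge0|]. split.
  - intro Y. split.
    + intros [[h1 ->]|[h1 [lam [hl ->]]]].
      * exists mzero. split. left; split; auto. rewrite mmul_zero_r, mmul_zero_l, mopp_zero; auto.
      * exists (mscal (lam/phi) D). split. right. split; auto. exists lam; split; auto.
        rewrite mmul_scal_r, mmul_scal_l. auto.
    + intros [Y' [[[h1 ->]|[h1 [lam [hl ->]]]] ->]].
      * left. split; auto. rewrite mmul_zero_r, mmul_zero_l, mopp_zero; auto.
      * right. split; auto. exists lam. split; auto. rewrite mmul_scal_r, mmul_scal_l. auto.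
  - intro Z. assert (K6 : forall c, mmul (mscal c (dev3 (Sig_tilde F Cp G))) Cp = mscal c (mmul (mmul Up D) Up)) by (intro c; rewrite mmul_scal_l, K5; auto). setoid_rewrite K6.
    assert (ECZ : mmul (mmul Cp Z) Cp = mmul (mmul Up (mmul (mmul Up Z) Up)) Up)
      by (rewrite <- HUU, !mmul_assoc; auto).
    rewrite ECZ. set (W := mmul (mmul Up Z) Up). split.
    + intros [lam [hl [hle [h0 E]]]].
      exists (mopp W). split; [|rewrite mopp_opp; auto].
      assert (EY : mopp W = mscal (lam / phi) D).
      { apply (conj_inj Up V); auto. rewrite mmul_opp_r, mmul_opp_l, E, mmul_scal_r, mmul_scal_l. auto. }
      rewrite EY. destruct hle as [hlt|heq].
      * left. split; auto. assert (lam = 0) by nra. subst lam.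
        replace (0 / phi) with 0 by (unfold Rdiv; ring). apply mscal0.
      * right. split; auto. exists lam. auto.
    + intros [Y' [[[h1 ->]|[h1 [lam [hl ->]]]] HW]].
      * exists 0. split; [lra|]. split; [lra|]. split; [ring|].
        rewrite HW, mopp_zero, mmul_zero_r, mmul_zero_l, mopp_zero.
        replace (0 / phi) with 0 by (unfold Rdiv; ring). rewrite mscal0. auto.
      * exists lam. split; auto. split; [lra|]. split; [rewrite h1; ring|].
        rewrite HW, mmul_opp_r, mmul_opp_l, mopp_opp, mmul_scal_r, mmul_scal_l. auto.
Qed.
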